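(* Let $H=(V,E)$ be a graph. (1) Let $\alpha=(\alpha(x))_{x\in V}$ be integers with $\alpha(x)\ge 2$ and let $G$ be $\alpha$-suspended over $H$. If $H$ has a Hamiltonian path, then $G$ has a Hamiltonian path. (2) Let $\ell\ge1$ and let $G$ be $\ell$-suspended over $H$. If $H$ has a Hamiltonian cycle of even length, then $G$ has a Hamiltonian cycle of even length.
   Context: $G$ is $\alpha$-suspended over $H$ if $G$ is the graph on vertex set $\{(x,i): x\in V, 0\le i\le\alpha(x)\}$ which is the union of the paths $((x,0),(x,1),\dots,(x,\alpha(x)))$ for $x\in V$ and the edges $\{(x,0),(y,0)\}$ and $\{(x,\alpha(x)),(y,\alpha(y))\}$ for all $\{x,y\}\in E$. For $\ell\ge1$, $P_\ell$ is the path on $0,\dots,\ell$ and $H\times P_\ell$ the Cartesian product (vertex set $V\times\{0,\dots,\ell\}$, with $(x,i)\sim(y,j)$ iff ($\{x,y\}\in E$ and $i=j$) or ($x=y$ and $|i-j|=1$)); $G$ is $\ell$-suspended over $H$ if $G$ is a spanning subgraph of $H\times P_\ell$ containing all edges $\{(x,i),(x,i+1)\}$ and all edges $\{(x,0),(y,0)\}$, $\{(x,\ell),(y,\ell)\}$ for $\{x,y\}\in E$. *)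

(* Defs.v *)
From mathcomp Require Import all_boot.
Unset Printing Implicit Defensive.

Definition simple_graph {V : finType} (e : rel V) : Prop :=
  symmetric e /\ irreflexive e.

Definition hamiltonian_path {T : finType} (e : rel T) : Prop :=
  exists (x : T) (s : seq T),
    [/\ uniq (x :: s), forall v : T, v \in x :: s & path e x s].

Definition even_hamiltonian_cycle {T : finType} (e : rel T) : Prop :=
  exists s : seq T,
    [/\ uniq s, 2 < size s, forall v : T, v \in s, cycle e s & ~~ odd (size s)].

Definition susp_vertex {V : finType} (alpha : V -> nat) : finType :=
  {x : V & 'I_(alpha x).+1}.

Definition susp_rel {V : finType} (e : rel V) (alpha : V -> nat)
  : rel (susp_vertex alpha) :=
  fun u v =>
    let x := tag u in let y := tag v in
    let i := val (tagged u) in let j := val (tagged v) in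
    [|| (x == y) && ((i.+1 == j) || (j.+1 == i)),
        e x y && (i == 0) && (j == 0)
      | e x y && (i == alpha x) && (j == alpha y)].

Definition prod_path_rel {V : finType} (e : rel V) (l : nat)
  : rel (V * 'I_l.+1) :=
  fun u v =>
    (e u.1 v.1 && (u.2 == v.2))
    || ((u.1 == v.1) && (((u.2 : nat).+1 == v.2) || ((v.2 : nat).+1 == u.2))).

Definition l_suspended {V : finType} (e : rel V) {l : nat}
  (g : rel (V * 'I_l.+1)) : Prop :=
  [/\ simple_graph g,
      (forall u v, g u v -> prod_path_rel e l u v),
      (forall (x : V) (i j : 'I_l.+1), (i : nat).+1 = j -> g (x, i) (x, j)) &
      (forall x y : V, e x y -> g (x, ord0) (y, ord0) /\ g (x, ord_max) (y, ord_max))].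

(* Main.v *)
Require Import Defs.
From mathcomp Require Import all_boot.

Section Snake.
Variables (V T : finType) (e : rel V) (r : rel T) (col : V -> seq T)
  (proj : T -> V) (bot top : V -> T).
Hypothesis rsym : symmetric r.
Hypothesis col_uniq : forall x, uniq (col x).
Hypothesis mem_col : forall x t, (t \in col x) = (proj t == x).
Hypothesis col_sorted : forall x, sorted r (col x).
Hypothesis col_bt : forall x, exists s, col x = bot x :: s /\ last (bot x) s = top x.
Hypothesis e_bot : forall x y, e x y -> r (bot x) (bot y).
Hypothesis e_top : forall x y, e x y -> r (top x) (top y).

Definition col' b x := if b then col x else rev (col x).

Fixpoint snake b xs := match xs with
  | [::] => [::]
  | x :: xs' => col' b x ++ snake (~~ b) xs' end.

Lemma mem_snake b xs t : (t \in snake b xs) = (proj t \in xs).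
Proof.
elim: xs b => //= x xs IH b.
by rewrite mem_cat IH in_cons; case: b; rewrite /col' ?mem_rev mem_col.
Qed.

Lemma uniq_snake b xs : uniq xs -> uniq (snake b xs).
Proof.
elim: xs b => //= x xs IH b /andP[xn u].
rewrite cat_uniq IH // andbT; apply/andP; split.
  by case: b; rewrite /col' ?rev_uniq col_uniq.
apply/hasPn => t; rewrite mem_snake => ht.
case: b; rewrite /col' ?mem_rev mem_col; apply/eqP => E; by move: ht; rewrite E (negbTE xn).
Qed.

Lemma col'_bt b x : exists s, col' b x = (if b then bot x else top x) :: s
   /\ last (if b then bot x else top x) s = (if b then top x else bot x).
Proof.
have [s [E L]] := col_bt x.
case: b; rewrite /col' E; first by exists s.
exists (rev (belast (bot x) s)).
have E2 : top x :: rev (belast (bot x) s) = rcons (rev s) (bot x).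
  by rewrite -rev_cons (lastI (bot x) s) rev_rcons L.
split; first by rewrite E2 rev_cons.
by rewrite -[last _ _]/(last (bot x) (top x :: rev (belast (bot x) s))) E2 last_rcons.
Qed.

Lemma sorted_col' b x : sorted r (col' b x).
Proof.
case: b; rewrite /col' //.
apply: (sub_sorted (e := fun a b => r b a)); first by move=> a c; rewrite rsym.
by rewrite rev_sorted.
Qed.

Lemma path_snake b x xs : path e x xs -> sorted r (snake b (x :: xs)).
Proof.
elim: xs b x => [|y ys IH] b x /=.
  by rewrite cats0 sorted_col'.
move=> /andP[exy pys].
have := IH (~~ b) y pys; rewrite /=.
have := sorted_col' b x.
have [s [E L]] := col'_bt b x.
have [s' [E' L']] := col'_bt (~~ b) y.
rewrite E E' /= => ps pr.
rewrite cat_path ps /= L pr andbT.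
by case: b {E E' L L' ps pr}; [apply: e_top | apply: e_bot].
Qed.

Lemma snake_cat b xs ys :
  snake b (xs ++ ys) = snake b xs ++ snake (odd (size xs) (+) b) ys.
Proof.
elim: xs b => //= x xs IH b.
rewrite IH catA; congr (_ ++ snake _ _).
by case: b; case: (odd _).
Qed.

Lemma size_snake b xs k : (forall x, size (col x) = k) ->
  size (snake b xs) = size xs * k.
Proof.
move=> hk; elim: xs b => //= x xs IH b.
by rewrite size_cat IH mulSn; case: b; rewrite /col' ?size_rev hk.
Qed.

End Snake.

Lemma path_iota m n : path (fun a b => a.+1 == b) m (iota m.+1 n).
Proof. by elim: n m => //= n IH m; rewrite eqxx IH. Qed.

Lemma last_iota m n : last m (iota m.+1 n) = m + n.
Proof. by elim: n m => [|n IH] m /=; rewrite ?addn0 // IH addnS. Qed.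

Lemma sorted_enum_succ n :
  sorted (fun i j : 'I_n => (val i).+1 == val j) (enum 'I_n).
Proof.
have -> : (fun i j : 'I_n => (val i).+1 == val j) =
  relpre val (fun a b => a.+1 == b) by [].
rewrite -sorted_map val_enum_ord.
by case: n => //= n; apply: path_iota.
Qed.

Lemma enum_bt n : exists s, enum 'I_n.+1 = ord0 :: s /\ last ord0 s = ord_max.
Proof.
have H := val_enum_ord n.+1.
case E: (enum 'I_n.+1) H => [|a s] //= [h1 h2].
exists s; split.
  by congr (_ :: _); apply: val_inj.
apply: val_inj; rewrite -(last_map val) /= h2.
by rewrite last_iota.
Qed.

Lemma map_bt (U : Type) n (f : 'I_n.+1 -> U) :
  exists s, map f (enum 'I_n.+1) = f ord0 :: s /\ last (f ord0) s = f ord_max.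
Proof.
have [s [E L]] := enum_bt n.
by exists (map f s); rewrite E /= last_map L.
Qed.

Lemma bool_helper (A B C D E F G H : bool) :
  [|| A && (B || C), D && E && F | D && G && H] =
  [|| A && (C || B), D && F && E | D && H && G].
Proof. by case: A; case: B; case: C; case: D; case: E; case: F; case: G; case: H. Qed.

Theorem lemma3p3 (V : finType) (e : rel V) (He : simple_graph e) :
  (forall alpha : V -> nat, (forall x, 2 <= alpha x) ->
     hamiltonian_path e -> hamiltonian_path (susp_rel e alpha)) /\
  (forall (l : nat) (g : rel (V * 'I_l.+1)), 1 <= l -> l_suspended e g ->
     even_hamiltonian_cycle e -> even_hamiltonian_cycle g).
Proof.
split.
- move=> alpha _ [x [s [u all p]]].
  pose f := fun (y : V) (i : 'I_(alpha y).+1) =>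
    existT (fun y => 'I_(alpha y).+1) y i : susp_vertex alpha.
  pose col := fun y => map (f y) (enum 'I_(alpha y).+1).
  have rsym : symmetric (susp_rel e alpha).
    move=> a b; rewrite /susp_rel (eq_sym (tag a)) He.1; apply: bool_helper.
  have mc : forall y t, (t \in col y) = (tag t == y).
    move=> y [z j] /=; apply/mapP/eqP => [[i _ E]|E].
      exact: (congr1 tag E).
    by subst; exists j; rewrite ?mem_enum.
  have cu : forall y, uniq (col y).
    move=> y; rewrite map_inj_uniq ?enum_uniq //.
    move=> i j E; have := congr1 (tagged_as (f y i)) E.
    by rewrite !tagged_asE.
  have cs : forall y, sorted (susp_rel e alpha) (col y).
    move=> y; rewrite sorted_map.
    apply: sub_sorted (sorted_enum_succ _) => i j h.
    by rewrite /relpre /susp_rel /= eqxx h.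
  have cbt : forall y, exists s, col y = f y ord0 :: s /\ last (f y ord0) s = f y ord_max.
    by move=> y; apply: map_bt.
  have eb : forall y z, e y z -> susp_rel e alpha (f y ord0) (f z ord0).
    by move=> y z h; rewrite /susp_rel /= h !eqxx !orbT.
  have et : forall y z, e y z -> susp_rel e alpha (f y ord_max) (f z ord_max).
    by move=> y z h; rewrite /susp_rel /= h !eqxx !orbT.
  have ps := path_snake _ _ _ _ _ _ _ rsym cs cbt eb et true _ _ p.
  have [s1 [E1 _]] := cbt x.
  move: ps; rewrite /= /col' E1 /= => ps.
  exists (f x ord0), (s1 ++ snake _ _ col false s); split => //.
  + have := uniq_snake _ _ _ _ cu mc true _ u; by rewrite /= /col' E1.
  + move=> v; have := mem_snake _ _ _ _ mc true (x :: s) v.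
    by rewrite /= /col' E1 all.
- move=> l g _ [[gsym _] _ gv ge] [s [u s2 all cyc ev]].
  pose col := fun y : V => map (pair y) (enum 'I_l.+1).
  have mc : forall y t, (t \in col y) = (t.1 == y).
    move=> y [z j] /=; apply/mapP/eqP => [[i _ [E _]]|E] //.
    by subst; exists j; rewrite ?mem_enum.
  have cu : forall y, uniq (col y).
    move=> y; rewrite map_inj_uniq ?enum_uniq //.
    by move=> i j [].
  have cs : forall y, sorted g (col y).
    move=> y; rewrite sorted_map.
    apply: sub_sorted (sorted_enum_succ _) => i j /eqP h.
    exact: gv.
  have cbt : forall y, exists s, col y = (y, ord0) :: s /\ last (y, ord0) s = (y, ord_max).
    by move=> y; exact: (@map_bt (V * 'I_l.+1) l (pair y)).
  have eb : forall y z, e y z -> g (y, ord0) (z, ord0) by move=> y z /ge [].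
  have et : forall y z, e y z -> g (y, ord_max) (z, ord_max) by move=> y z /ge [].
  case: s u s2 all cyc ev => [//|x0 xs].
  case/lastP: xs => [//|ys z] u s2 all cyc ev.
  move: cyc; rewrite /= rcons_path last_rcons => /andP[p ezx].
  have ps := path_snake _ _ _ _ _ _ _ gsym cs cbt eb et true _ _ p.
  pose S := snake _ _ col true (x0 :: rcons ys z).
  have [s1 [E1 _]] := cbt x0.
  exists S; split.
  + exact: (uniq_snake _ _ _ _ cu mc).
  + rewrite (@size_snake _ _ _ _ _ l.+1); last by move=> y; rewrite size_map size_enum_ord.
    by rewrite mulnS; move: s2; case: (size _) => [|[|[|]]].
  + by move=> v; rewrite (mem_snake _ _ _ _ mc) all.
  + have ES : S = (x0, ord0) :: behead S.
      by rewrite /S /= /col' E1.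
    rewrite ES /= rcons_path.
    move: ps; rewrite -/S ES /= => -> /=.
    have -> : last (x0, ord0) (behead S) = last (x0, ord0) S by rewrite {2}ES.
    rewrite /S -rcons_cons -cats1 snake_cat /= last_cat.
    move: ev; rewrite /= size_rcons /= => ev.
    rewrite negbK in ev. rewrite ev /col' /=.
    have [s3 [E3 L3]] := col'_bt _ _ _ _ _ cbt false z.
    rewrite /col' /= in E3 L3.
    by rewrite cats0 E3 /= L3; apply: eb.
  + rewrite (@size_snake _ _ _ _ _ l.+1); last by move=> y; rewrite size_map size_enum_ord.
    by rewrite oddM (negbTE ev).
Qed.
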